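(* Let $V$ be a finite set of $n$ elements and $w:\binom{V}{2}\to\mathbb{R}$ arbitrary real weights on its unordered pairs (not necessarily metric or nonnegative). Let $G$ be the complete graph on $V$ with edge weights $w$, let $T$ be a maximum-weight spanning tree of $G$, and let $\chi:V\to\{0,1\}$ be a proper 2-coloring of $T$. Then for every $\lambda\in\mathbb{R}$ and every $c\in\{0,\dots,n\}$: the graph $G_{>\lambda}$ admits a proper 2-coloring of cardinality $c$ if and only if $\mathrm{diam}(\chi)\le\lambda$ and $T_{>\lambda}$ admits a proper 2-coloring of cardinality $c$.
   Context: For a graph $H=(V,E)$ with edge weights $w$, $H_{>\lambda}$ denotes the spanning subgraph $(V,\{uv\in E: w(uv)>\lambda\})$. A 2-coloring $\varphi:V\to\{0,1\}$ is proper for a graph if the endpoints of every edge receive different colors; it has cardinality $c$ if one of its color classes has exactly $c$ elements. For $S\subseteq V$, $\mathrm{diam}(S)=\max_{\{u,v\}\subseteq S}w(uv)$, with $\mathrm{diam}(S)=-\infty$ if $|S|\le1$. For a 2-coloring $\varphi$, $\mathrm{diam}(\varphi)=\max\{\mathrm{diam}(\varphi^{-1}(0)),\mathrm{diam}(\varphi^{-1}(1))\}$, where diameters use all pair weights $w$. *)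

(* Defs.v *)
From HB Require Import structures.
From mathcomp Require Import all_boot all_order all_algebra.
From mathcomp Require Import reals constructive_ereal.
Set Implicit Arguments. Unset Strict Implicit. Unset Printing Implicit Defensive.
Import Order.TTheory GRing.Theory Num.Theory.
Local Open Scope ring_scope.

Section Defs.
Variables (R : realType) (V : finType).

Definition pairs : {set {set V}} := [set e : {set V} | #|e| == 2%N].

(* Weights w : binom(V,2) -> R are given as w : {set V} -> R, only used on 2-sets. *)

Definition adj (E : {set {set V}}) : rel V := fun u v => [set u; v] \in E.

Definition above (w : {set V} -> R) (E : {set {set V}}) (lam : R) : {set {set V}} :=
  [set e in E | lam < w e].

Definition connectedE (E : {set {set V}}) : Prop :=
  forall u v : V, connect (adj E) u v.
Definition acyclic (E : {set {set V}}) : Prop :=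
  forall p : seq V, uniq p -> (2 < size p)%N -> ~~ cycle (adj E) p.
Definition spanning_tree (E : {set {set V}}) : Prop :=
  [/\ E \subset pairs, connectedE E & acyclic E].

Definition weight (w : {set V} -> R) (E : {set {set V}}) : R := \sum_(e in E) w e.

Definition max_spanning_tree (w : {set V} -> R) (T : {set {set V}}) : Prop :=
  spanning_tree T /\ forall T', spanning_tree T' -> weight w T' <= weight w T.

Definition proper_col (E : {set {set V}}) (phi : V -> bool) : Prop :=
  forall u v : V, [set u; v] \in E -> phi u != phi v.

Definition has_card (phi : V -> bool) (c : nat) : Prop :=
  #|[set x | phi x == false]| = c \/ #|[set x | phi x == true]| = c.

Definition admits_proper_card (E : {set {set V}}) (c : nat) : Prop :=
  exists phi : V -> bool, proper_col E phi /\ has_card phi c.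

(* diam(S) = max of w over pairs inside S, -oo if |S| <= 1. *)
Definition diam (w : {set V} -> R) (S : {set V}) : \bar R :=
  \big[Order.max/-oo%E]_(e in pairs | e \subset S) (w e)%:E.

Definition diam_col (w : {set V} -> R) (phi : V -> bool) : \bar R :=
  Order.max (diam w [set x | phi x == false]) (diam w [set x | phi x == true]).

End Defs.

(* Main.v *)
Require Import Defs.
From HB Require Import structures.
From mathcomp Require Import all_boot all_order all_algebra.
From mathcomp Require Import reals constructive_ereal.
From mathcomp Require Import lra.
Import Order.TTheory GRing.Theory Num.Theory.
Local Open Scope ring_scope.

Section Aux.
Variable V : finType.
Implicit Types (E : {set {set V}}).

Lemma adj_sym E : symmetric (adj E).
Proof. by move=> x y; rewrite /adj setUC. Qed.

Lemma conn_sym E x y : connect (adj E) x y = connect (adj E) y x.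
Proof. exact: (sym_connect_sym (adj_sym E)). Qed.

Lemma adj_sub E (F : {set {set V}}) : E \subset F -> subrel (adj E) (adj F).
Proof. by move=> s x y; exact: (subsetP s). Qed.

Lemma pair_cases (x y a b : V) : [set x; y] = [set a; b] ->
  (x = a /\ y = b) \/ (x = b /\ y = a).
Proof.
move=> h.
have hx : x \in [set a; b] by rewrite -h !inE eqxx.
have hy : y \in [set a; b] by rewrite -h !inE eqxx orbT.
have ha : a \in [set x; y] by rewrite h !inE eqxx.
have hb : b \in [set x; y] by rewrite h !inE eqxx orbT.
move: hx hy ha hb; rewrite !inE => /orP[]/eqP-> /orP[]/eqP->; rewrite ?orbb.
- by move=> _ /eqP ->; left.
- by left.
- by right.
- by move/eqP=> ->; left.
Qed.

Lemma conn_closedP (e : rel V) (P : V -> Prop) :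
  (forall a b, e a b -> P a -> P b) ->
  forall x y, connect e x y -> P x -> P y.
Proof.
move=> h x y /connectP[p]; elim: p x => [|z p IH] x /=; first by move=> _ ->.
by move=> /andP[exz pz] ly Px; apply: (IH z pz ly); apply: h exz Px.
Qed.

Lemma conn_add1 E (u v x y : V) : connect (adj ([set u; v] |: E)) x y ->
  connect (adj E) x y \/ (connect (adj E) x u /\ connect (adj E) v y) \/
  (connect (adj E) x v /\ connect (adj E) u y).
Proof.
move=> c.
apply: (@conn_closedP _ (fun z => connect (adj E) x z \/
   (connect (adj E) x u /\ connect (adj E) v z) \/
   (connect (adj E) x v /\ connect (adj E) u z)) _ x y c);
  last by left; exact: connect0.
move=> a b; rewrite /adj in_setU1 => /orP[/eqP/pair_cases [[-> ->]|[-> ->]] | hab].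
- move=> [h|[[h _]|[h _]]].
  + by right; left; split => //; exact: connect0.
  + by right; left; split => //; exact: connect0.
  + by left.
- move=> [h|[[h _]|[h _]]].
  + by right; right; split => //; exact: connect0.
  + by left.
  + by right; right; split => //; exact: connect0.
- move=> [h|[[h1 h2]|[h1 h2]]].
  + by left; apply: connect_trans h (connect1 hab).
  + by right; left; split => //; apply: connect_trans h2 (connect1 hab).
  + by right; right; split => //; apply: connect_trans h2 (connect1 hab).
Qed.

Definition forest2 E := forall a b, [set a; b] \in E ->
  ~~ connect (adj (E :\ [set a; b])) a b.

Lemma acyc_forest E : E \subset pairs V -> acyclic E -> forest2 E.
Proof.
move=> sub ac a b hab; apply/negP => /connectP[p pp lp].
have neq : a != b.
  by have := subsetP sub _ hab; rewrite /pairs inE cards2; case: (a == b).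
move: lp; case: (shortenP pp) => q qp uq _ lq.
case: q qp uq lq => [|c [|d r]] qp uq lq.
- by move: neq; rewrite lq eqxx.
- by move: qp; rewrite /= lq /adj in_setD1 eqxx.
- have := ac (a :: [:: c, d & r]) uq isT; apply/negP/negPn.
  rewrite /cycle rcons_path; apply/andP; split.
    apply: sub_path qp; apply: adj_sub; exact: subD1set.
  by rewrite -lq /adj setUC.
Qed.

Lemma forest_acyc E : forest2 E -> acyclic E.
Proof.
move=> fo [|x0 [|x1 r]] // uq sz.
apply/negP => /=; rewrite rcons_path => /and3P[h01 pr hl].
apply: (negP (fo x0 x1 h01)); rewrite conn_sym.
move: uq => /= /andP[nx0 /andP[nx1 ur]].
have lin : last x1 r \in r by case: r sz {pr hl nx0 nx1 ur} => [|r0 r'] //= _; rewrite mem_last.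
have c1 : connect (adj (E :\ [set x0; x1])) x1 (last x1 r).
  apply/connectP; exists r => //.
  apply: (@sub_in_path _ (predC1 x0) (adj E)); last exact: pr.
    move=> a b; rewrite !inE /adj => ha hb hab.
    rewrite in_setD1 hab andbT; apply/negP => /eqP/pair_cases [[h _]|[_ h]].
      by rewrite h eqxx in ha.
    by rewrite h eqxx in hb.
  apply/allP => z zin; rewrite inE; apply/negP => /eqP hz.
  by rewrite -hz zin in nx0.
apply: connect_trans c1 (connect1 _).
move: hl; rewrite /adj in_setD1 => -> ; rewrite andbT; apply/negP => /eqP/pair_cases [[h _]|[h _]].
  by move: nx0; rewrite -h inE lin orbT.
by move: nx1; rewrite -h lin.
Qed.

Lemma crossing E (S : {set V}) x p :
  path (adj E) x p -> x \in S -> last x p \notin S ->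
  exists a b, [/\ [set a; b] \in E, a \in S, b \notin S &
     connect (adj (E :\ [set a; b])) b (last x p)].
Proof.
elim/last_ind: p => [|p z IH] /=; first by move=> _ ->.
rewrite rcons_path last_rcons => /andP[pp hz] xS zS.
case: (boolP (last x p \in S)) => lS.
- by exists (last x p), z; split => //; exact: connect0.
- have [a [b [hab aS bS cb]]] := IH pp xS lS.
  exists a, b; split => //; apply: connect_trans cb (connect1 _).
  move: hz; rewrite /adj in_setD1 => ->; rewrite andbT; apply/negP => /eqP/pair_cases [[h _]|[_ h]].
    by rewrite h aS in lS.
  by rewrite h aS in zS.
Qed.

Variable R : realType.

Lemma in_above (w : {set V} -> R) E lam g :
  (g \in above w E lam) = (g \in E) && (lam < w g).
Proof. by rewrite /above inE. Qed.

Lemma key (w : {set V} -> R) T lam u v : max_spanning_tree w T ->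
  [set u; v] \in pairs V -> lam < w [set u; v] ->
  connect (adj (above w T lam)) u v.
Proof.
move=> [[Tsub Tconn Tacyc] Tmax] fp hw.
set A := above w T lam.
have AT : A \subset T by apply/subsetP => g; rewrite in_above => /andP[].
apply/idPn => nc.
set S := [set z | connect (adj A) u z].
have uS : u \in S by rewrite inE connect0.
have vS : v \notin S by rewrite inE.
have /connectP[p pp lp] := Tconn u v.
have [a [b [hab aS bS cb]]] : exists a b, [/\ [set a; b] \in T, a \in S, b \notin S &
     connect (adj (T :\ [set a; b])) b (last u p)] by apply: crossing pp uS _; rewrite -lp.
rewrite -lp in cb.
set e := [set a; b] in hab cb *.
rewrite inE in aS.
have eA : e \notin A.
  apply/negP => eA; move: bS; rewrite inE.
  by rewrite (connect_trans aS (connect1 (eA : adj A a b))).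
have we : w e <= lam by move: eA; rewrite in_above hab /= -leNgt.
have AsubTe : subrel (adj A) (adj (T :\ e)).
  move=> x y hxy; rewrite /adj in_setD1 (subsetP AT _ hxy) andbT.
  apply/negP => /eqP h; rewrite /adj h in hxy; by rewrite hxy in eA.
have cua : connect (adj (T :\ e)) u a.
  exact: (connect_sub (fun x y h => connect1 (AsubTe x y h)) aS).
have fT : [set u; v] \notin T.
  apply/negP => fT; move/negP: nc; apply; apply: connect1.
  by rewrite /adj in_above fT hw.
have fo := acyc_forest T Tsub Tacyc.
have nab := fo a b hab.
have nuv : ~~ connect (adj (T :\ e)) u v.
  apply/negP => c; move/negP: nab; apply.
  rewrite conn_sym in cua; rewrite conn_sym in cb.
  exact: connect_trans cua (connect_trans c cb).
set f := [set u; v] in fp hw fT nc *.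
set T' := f |: (T :\ e).
have fTe : f \notin T :\ e by rewrite in_setD1 (negbTE fT) andbF.
have sub1 : subrel (adj (T :\ e)) (adj T') by apply: adj_sub; exact: subsetUr.
have lift : forall x y, connect (adj (T :\ e)) x y -> connect (adj T') x y.
  exact: (connect_sub (fun x y h => connect1 (sub1 x y h))).
have st' : spanning_tree T'.
  split.
  - apply/subsetP => g; rewrite in_setU1 => /orP[/eqP->//|].
    by rewrite in_setD1 => /andP[_ /(subsetP Tsub)].
  - move=> x y; apply: (connect_sub _ (Tconn x y)) => s t hst.
    have cab : connect (adj T') a b.
      rewrite conn_sym in cua.
      apply: connect_trans (lift _ _ cua) _.
      apply: connect_trans (connect1 (_ : adj T' u v)) _.
        by rewrite /adj in_setU1 eqxx.
      by apply: lift; rewrite conn_sym.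
    case: (boolP ([set s; t] == e)) => [/eqP/pair_cases [[-> ->]|[-> ->]] | ne].
    + exact: cab.
    + by rewrite conn_sym.
    + by apply: connect1; apply: sub1; rewrite /adj in_setD1 ne.
  - apply: forest_acyc => x y; rewrite in_setU1 => /orP[/eqP hf | hg].
    + rewrite hf setU1K //.
      by case: (pair_cases _ _ _ _ hf) => [[-> ->]|[-> ->]]; rewrite // conn_sym.
    + set g := [set x; y] in hg *.
      have gT : g \in T by move: hg; rewrite in_setD1 => /andP[].
      have gf : g != f by apply/negP => /eqP h; rewrite -h gT in fT.
      have eqT : T' :\ g = f |: ((T :\ e) :\ g).
        apply/setP => h; rewrite !in_setD1 !in_setU1 !in_setD1.
        case: (h =P f) => [->|_]; last by [].
        by rewrite eq_sym gf.
      rewrite eqT; apply/negP => /conn_add1 [cc|[[c1 c2]|[c1 c2]]].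
      * move/negP: (fo x y gT); apply.
        move: cc; apply: connect_sub => s t hst; apply: connect1.
        move: hst; apply: adj_sub; apply/subsetP => k.
        by rewrite !in_setD1 => /and3P[-> _ ->].
      * have lE : forall s t, connect (adj ((T :\ e) :\ g)) s t -> connect (adj (T :\ e)) s t.
          apply: connect_sub => s t hst; apply: connect1; move: hst.
          apply: adj_sub; exact: subD1set.
        move/negP: nuv; apply.
        rewrite conn_sym in c1; rewrite conn_sym in c2.
        apply: connect_trans (lE _ _ c1) _.
        by apply: connect_trans (connect1 (hg : adj _ x y)) (lE _ _ c2).
      * have lE : forall s t, connect (adj ((T :\ e) :\ g)) s t -> connect (adj (T :\ e)) s t.
          apply: connect_sub => s t hst; apply: connect1; move: hst.
          apply: adj_sub; exact: subD1set.
        move/negP: nuv; apply; rewrite conn_sym.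
        rewrite conn_sym in c1; rewrite conn_sym in c2.
        apply: connect_trans (lE _ _ c1) _.
        by apply: connect_trans (connect1 (hg : adj _ x y)) (lE _ _ c2).
have := Tmax T' st'.
rewrite /weight (big_setU1 _ fTe) /= (big_setD1 _ hab) /=.
rewrite lerD2r => h.
have := lt_le_trans hw (le_trans h we); by rewrite ltxx.
Qed.

End Aux.

Theorem lemma1 (R : realType) (V : finType) (w : {set V} -> R)
  (T : {set {set V}}) (chi : V -> bool) :
  max_spanning_tree w T -> proper_col T chi ->
  forall (lam : R) (c : nat), (c <= #|V|)%N ->
    (admits_proper_card (above w (pairs V) lam) c <->
     ((diam_col w chi <= lam%:E)%E /\ admits_proper_card (above w T lam) c)).
Proof.
move=> hT hchi lam c _.
have [[Tsub _ _] _] := hT.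
set A := above w T lam.
have AP : A \subset above w (pairs V) lam.
  apply/subsetP => g; rewrite !in_above => /andP[gT ->]; rewrite andbT.
  exact: (subsetP Tsub).
have chiA : proper_col A chi.
  by move=> x y; rewrite in_above => /andP[h _]; exact: hchi.
have inv : forall phi, proper_col A phi -> forall x y, connect (adj A) x y ->
    phi x (+) chi x = phi y (+) chi y.
  move=> phi hphi x y cxy.
  apply: (@conn_closedP _ _ (fun z => phi x (+) chi x = phi z (+) chi z) _ x y cxy) => //.
  move=> a b hab ->.
  have := hphi a b hab; have := chiA a b hab.
  by case: (phi a); case: (phi b); case: (chi a); case: (chi b).
split.
- move=> [phi [hphi hc]].
  have phiA : proper_col A phi by move=> x y h; apply: hphi; exact: (subsetP AP).
  split; last by exists phi.
  have dS : forall bb, (diam w [set x | chi x == bb] <= lam%:E)%E.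
    move=> bb; apply/bigmax_leP; split; first exact: leNye.
    move=> g /andP[gp gS].
    have /cards2P[x [y [xy gxy]]] : #|g| == 2 by move: gp; rewrite /pairs inE.
    rewrite lee_fin leNgt; apply/negP => hw.
    rewrite gxy in gp gS hw.
    have cx : chi x = bb by move: (subsetP gS x); rewrite !inE eqxx => /(_ isT)/eqP.
    have cy : chi y = bb by move: (subsetP gS y); rewrite !inE eqxx orbT => /(_ isT)/eqP.
    have := inv phi phiA x y (@key V R w T lam x y hT gp hw).
    have hxy : [set x; y] \in above w (pairs V) lam by rewrite in_above gp hw.
    have := hphi x y hxy.
    rewrite cx cy => ne /(congr1 (addb ^~ bb)); rewrite -!addbA addbb !addbF => eq.
    by rewrite eq eqxx in ne.
  by rewrite /diam_col ge_max !dS.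
- move=> [hd [psi [hpsi hc]]]; exists psi; split => //.
  move=> x y hxy; move: (hxy); rewrite in_above => /andP[gp hw].
  have := inv psi hpsi x y (@key V R w T lam x y hT gp hw).
  have neq : chi x != chi y.
    apply/negP => /eqP ce; move: hd; rewrite /diam_col ge_max => /andP[h0 h1].
    have hd' : (diam w [set z | chi z == chi x] <= lam%:E)%E.
      by case: (chi x); [exact: h1 | exact: h0].
    have : ((w [set x; y])%:E <= diam w [set z | chi z == chi x])%E.
      apply: le_bigmax_cond; rewrite gp /=.
      by apply/subsetP => z; rewrite !inE => /orP[]/eqP->; rewrite ?ce eqxx.
    move=> h; have := le_trans h hd'; by rewrite lee_fin leNgt hw.
  by move: neq; case: (psi x); case: (psi y); case: (chi x); case: (chi y).
Qed.
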